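(* For each point $p$ of $\mathcal{W}(3,2)$, consider the type-$p$ $X$-states, i.e. the two-qubit density matrices $\rho=\tfrac14\big(I\otimes I+\sum_{q\in H_p}c_q\,q\big)$ with real coefficients $c_q$. The $9$ types $p$ of Group 2 (those for which some valid type-$p$ state is entangled) are exactly the $9$ points $p$ whose perp-set $H_p$ intersects $\mathcal{Q}_0$ tangentially. The $6$ types of Group 1 (those for which every valid type-$p$ state is separable) are exactly the $6$ points $p$ whose perp-set $H_p$ intersects $\mathcal{Q}_0$ transversally.
   Context: The symplectic polar space $\mathcal{W}(3,2)$ is realized as follows. Its $15$ points are the $15$ nontrivial two-qubit Pauli operators $A\otimes B$ with $A,B\in\{I,X,Y,Z\}$, not both $I$, taken up to phase. Its $15$ lines are the triples $\{P,Q,PQ\}$ (up to phase) of pairwise commuting such operators. For a point $p$, its perp-set is $H_p=\{q: q \text{ commutes with } p\}$. It contains $p$ and has $7$ points: the union of the three lines through $p$. $\mathcal{Q}_0$ is the set of the $9$ points $A\otimes B$ with $A,B\in\{X,Y,Z\}$. Together with the $6$ lines of $\mathcal{W}(3,2)$ contained in it, $\mathcal{Q}_0$ forms a $3\times3$ grid; it is the hyperbolic quadric $x_1x_2+x_3x_4+x_1+x_2+x_3+x_4=0$ in the coordinates where $(Z^{\mu_1}X^{\nu_1})\otimes(Z^{\mu_2}X^{\nu_2})\mapsto[\mu_1:\nu_1:\mu_2:\nu_2]$. A geometric hyperplane of a point-line geometry is a set of points such that every line either lies in it or meets it in exactly one point. The geometric hyperplanes of the grid $\mathcal{Q}_0$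 are of two kinds: - perp-sets of the grid: a point together with the two grid lines through it ($5$ points); - ovoids: $3$ points, no two on a common grid line. $H_p$ intersects $\mathcal{Q}_0$ tangentially if $H_p\cap\mathcal{Q}_0$ is a perp-set of the grid, and transversally if $H_p\cap\mathcal{Q}_0$ is an ovoid of the grid. A density matrix is valid if positive semidefinite, and separable/entangled according to whether its partial transpose is positive semidefinite or not. *)

(* Defs.v *)
From HB Require Import structures.
From mathcomp Require Import all_boot all_order all_algebra.
From mathcomp Require Import complex mxtens.
From mathcomp Require Import reals.
Set Implicit Arguments. Unset Strict Implicit. Unset Printing Implicit Defensive.
Import Order.TTheory GRing.Theory Num.Theory.
Local Open Scope ring_scope.
Local Open Scope complex_scope.

Section W32.
Variable R : realType.
Local Notation C := R[i].

Definition pauliX : 'M[C]_2 := \matrix_(i < 2, j < 2) (if i == j then 0 else 1).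
Definition pauliY : 'M[C]_2 :=
  \matrix_(i < 2, j < 2) (if i == j then 0 else if i == 0 then - 'i else 'i).
Definition pauliZ : 'M[C]_2 :=
  \matrix_(i < 2, j < 2) (if i == j then (if i == 0 then 1 else -1) else 0).

Definition pauli (k : 'I_4) : 'M[C]_2 :=
  match val k with
  | 0 => 1%:M
  | 1 => pauliX
  | 2 => pauliY
  | _ => pauliZ
  end.

(* two-qubit Pauli labels A (x) B; the points of W(3,2) are the labels other than (I,I) *)
Definition pt := ('I_4 * 'I_4)%type.
Definition is_point (p : pt) : bool := p != (0, 0).

Definition opm (p : pt) : 'M[C]_(2 * 2) := pauli p.1 *t pauli p.2.

Definition commutes (p q : pt) : bool := opm p *m opm q == opm q *m opm p.

Definition perp (p : pt) : {set pt} := [set q | is_point q && commutes p q].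

Definition is_line (L : {set pt}) : Prop :=
  exists a b c : pt,
    [/\ L = [set a; b; c], [&& is_point a, is_point b & is_point c],
        [&& a != b, b != c & a != c],
        [&& commutes a b, commutes b c & commutes a c] &
        exists lam : C, opm a *m opm b = lam *: opm c].

Definition Q0 : {set pt} := [set q : pt | (q.1 != 0) && (q.2 != 0)].

Definition grid_line (L : {set pt}) : Prop := is_line L /\ L \subset Q0.

Definition grid_perp_set (S : {set pt}) : Prop :=
  exists x, x \in Q0 /\
    forall y, y \in S <-> (y = x \/ exists L, [/\ grid_line L, x \in L & y \in L]).

Definition grid_ovoid (S : {set pt}) : Prop :=
  [/\ S \subset Q0, #|S| = 3 &
      forall x y, x \in S -> y \in S -> x != y ->
        ~ exists L, [/\ grid_line L, x \in L & y \in L]].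

Definition tangential_at (p : pt) : Prop := grid_perp_set (perp p :&: Q0).
Definition transversal_at (p : pt) : Prop := grid_ovoid (perp p :&: Q0).

Definition xstate (p : pt) (c : pt -> R) : 'M[C]_(2 * 2) :=
  4^-1 *: (1%:M + \sum_(q in perp p) (c q)%:C *: opm q).

Definition psd (M : 'M[C]_(2 * 2)) : Prop :=
  forall v : 'cV[C]_(2 * 2), 0 <= ((map_mx Num.conj v)^T *m M *m v) 0 0.

(* partial transpose on the second qubit *)
Definition ptrans (M : 'M[C]_(2 * 2)) : 'M[C]_(2 * 2) :=
  \matrix_(i, j) M (mxtens_index ((mxtens_unindex i).1, (mxtens_unindex j).2))
                   (mxtens_index ((mxtens_unindex j).1, (mxtens_unindex i).2)).

Definition valid (M : 'M[C]_(2 * 2)) : Prop := psd M.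
Definition separable (M : 'M[C]_(2 * 2)) : Prop := psd (ptrans M).
Definition entangled (M : 'M[C]_(2 * 2)) : Prop := ~ psd (ptrans M).

Definition group2 (p : pt) : Prop :=
  exists c : pt -> R, valid (xstate p c) /\ entangled (xstate p c).
Definition group1 (p : pt) : Prop :=
  forall c : pt -> R, valid (xstate p c) -> separable (xstate p c).

End W32.

(* Main.v *)
Require Import Defs.
From HB Require Import structures.
From mathcomp Require Import all_boot all_order all_algebra.
From mathcomp Require Import complex mxtens.
From mathcomp Require Import reals.
Set Implicit Arguments. Unset Strict Implicit. Unset Printing Implicit Defensive.
Import Order.TTheory GRing.Theory Num.Theory.
Local Open Scope ring_scope.
Local Open Scope complex_scope.

Definition I0 : 'I_4 := @Ordinal 4 0 isT.
Definition I1 : 'I_4 := @Ordinal 4 1 isT.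
Definition I2 : 'I_4 := @Ordinal 4 2 isT.
Definition I3 : 'I_4 := @Ordinal 4 3 isT.

Definition mulp (j k : 'I_4) : 'I_4 :=
  match val j, val k with
  | 0, _ => k | _, 0 => j
  | 1, 1 | 2, 2 | 3, 3 => I0
  | 1, 2 | 2, 1 => I3
  | 1, 3 | 3, 1 => I2
  | _, _ => I1 end.
Definition expo (j k : 'I_4) : nat :=
  match val j, val k with
  | 1, 2 | 2, 3 | 3, 1 => 1
  | 2, 1 | 3, 2 | 1, 3 => 3
  | _, _ => 0 end.

Definition ords : seq 'I_4 := [:: I0; I1; I2; I3].
Definition pts : seq pt := [seq (x, y) | x <- ords, y <- ords].
Lemma mem_ords j : j \in ords.
Proof. by case: j => [[|[|[|[|//]]]] ?]. Qed.
Lemma mem_pts a : a \in pts.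
Proof. by case: a => x y; apply/allpairsP; exists (x, y); rewrite !mem_ords. Qed.
Lemma all_pts (P : pred pt) : all P pts -> forall a, P a.
Proof. by move/allP => h a; apply: h; apply: mem_pts. Qed.
Lemma all_pts2 (P : pt -> pt -> bool) : all (fun a => all (P a) pts) pts -> forall a b, P a b.
Proof. by move=> h a; apply: all_pts; apply: (all_pts h). Qed.

Section S.
Variable R : realType.
Local Notation C := R[i].

Lemma i2 : 'i%C ^+ 2 = -1 :> C. Proof. exact: sqr_i. Qed.
Lemma i3 : 'i%C ^+ 3 = - 'i%C :> C. Proof. by rewrite exprS i2 mulrN1. Qed.
Lemma ii : 'i%C * 'i%C = -1 :> C. Proof. by rewrite -expr2 i2. Qed.

Lemma pauli_mul (j k : 'I_4) :
  pauli R j *m pauli R k = 'i%C ^+ (expo j k) *: pauli R (mulp j k).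
Proof.
case: j => [[|[|[|[|//]]]] ?]; case: k => [[|[|[|[|//]]]] ?];
rewrite /pauli /= ?mul1mx ?mulmx1 ?expr0 ?scale1r //;
apply/matrixP => a b; rewrite !mxE !big_ord_recr !big_ord0 /= !mxE;
case: a => [[|[|//]] ?]; case: b => [[|[|//]] ?];
rewrite /= ?i3 ?expr1 ?mulr0 ?mul0r ?mulr1 ?mul1r ?addr0 ?add0r ?ii ?mulrN ?mulNr ?mulr1 ?mulN1r ?opprK //.
all: rewrite ?mul1r ?ii ?opprK //.
Qed.

Lemma mulpC j k : mulp j k = mulp k j.
Proof. by case: j => [[|[|[|[|//]]]] ?]; case: k => [[|[|[|[|//]]]] ?]; apply: val_inj. Qed.

Lemma tensZl m n p q (a : C) (A : 'M[C]_(m,n)) (B : 'M[C]_(p,q)) :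
  (a *: A) *t B = a *: (A *t B).
Proof. by apply/matrixP => i j; rewrite !mxE mulrA. Qed.
Lemma tensZr m n p q (a : C) (A : 'M[C]_(m,n)) (B : 'M[C]_(p,q)) :
  A *t (a *: B) = a *: (A *t B).
Proof. by apply/matrixP => i j; rewrite !mxE mulrCA. Qed.

Definition mulpt (a b : pt) : pt := (mulp a.1 b.1, mulp a.2 b.2).
Definition ex (a b : pt) : nat := expo a.1 b.1 + expo a.2 b.2.

Lemma opm_mul a b : opm R a *m opm R b = 'i%C ^+ (ex a b) *: opm R (mulpt a b).
Proof.
by rewrite /opm tensmx_mul !pauli_mul tensZl tensZr scalerA -exprD.
Qed.

Lemma opm1 : opm R (I0, I0) = 1.
Proof.
apply/matrixP => i j; case: (mxtens_indexP i) => i0 i1; case: (mxtens_indexP j) => j0 j1.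
rewrite tensmxE /= !mxE (inj_eq (can_inj (@mxtens_indexK 2 2))) xpair_eqE.
by case: (i0 == j0); case: (i1 == j1); rewrite ?mulr1 ?mulr0.
Qed.

Lemma expo_diag j : expo j j = 0%N.
Proof. by case: j => [[|[|[|[|//]]]] ?]. Qed.
Lemma mulp_diag j : mulp j j = I0.
Proof. by case: j => [[|[|[|[|//]]]] ?]; apply: val_inj. Qed.

Lemma opm_sq a : opm R a *m opm R a = 1.
Proof.
by rewrite opm_mul /ex /mulpt !expo_diag !mulp_diag opm1 expr0 scale1r.
Qed.

Lemma i4 : 'i%C ^+ 4 = 1 :> C.
Proof. by rewrite (exprM _ 2 2) i2 expr2 mulrNN mulr1. Qed.

Lemma ipow_mod n : 'i%C ^+ (n %% 4) = 'i%C ^+ n :> C.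
Proof. exact: expr_mod i4. Qed.

Lemma N1_neq1 : (-1 : C) != 1.
Proof. by rewrite -subr_eq0 -opprD oppr_eq0 -mulr2n pnatr_eq0. Qed.
Lemma i_neq1 : 'i%C != 1 :> C.
Proof. by apply/eqP => h; move: i2; rewrite h expr1n => /eqP; rewrite eq_sym (negPf N1_neq1). Qed.
Lemma i_neqN1 : 'i%C != -1 :> C.
Proof. by apply/eqP => h; move: i2; rewrite h sqrrN expr1n => /eqP; rewrite eq_sym (negPf N1_neq1). Qed.
Lemma i_neqNi : 'i%C != - 'i%C :> C.
Proof.
apply/eqP => h; have : 'i%C = 0 :> C.
  have : 'i%C *+ 2 = 0 :> C by rewrite mulr2n {2}h subrr.
  by move/eqP; rewrite mulrn_eq0 => /eqP.
by move=> h0; move: i2; rewrite h0 expr0n /= => /eqP; rewrite eq_sym oppr_eq0 oner_eq0.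
Qed.

Lemma ipow_inj m n : (m < 4)%N -> (n < 4)%N -> 'i%C ^+ m = 'i%C ^+ n :> C -> m = n.
Proof.
have h1 := negPf N1_neq1; have h2 := negPf i_neq1; have h3 := negPf i_neqN1;
have h4 := negPf i_neqNi.
have h1' : (1 == -1 :> C) = false by rewrite eq_sym.
have h2' : (1 == 'i%C :> C) = false by rewrite eq_sym.
have h3' : (-1 == 'i%C :> C) = false by rewrite eq_sym.
have h4' : (- 'i%C == 'i%C :> C) = false by rewrite eq_sym.
have h5 : (1 == - 'i%C :> C) = false by rewrite eq_sym eqr_oppLR.
case: m => [|[|[|[|//]]]] _; case: n => [|[|[|[|//]]]] _ //;
rewrite ?expr0 ?expr1 ?i2 ?i3 => /eqP;
rewrite ?eqr_opp ?eqr_oppLR ?opprK ?h1 ?h2 ?h3 ?h4 ?h1' ?h2' ?h3' ?h4' ?h5 //.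
Qed.

Definition commb (a b : pt) : bool := (ex a b %% 4 == ex b a %% 4)%N.

Lemma mulptC a b : mulpt a b = mulpt b a.
Proof. by rewrite /mulpt mulpC [mulp a.2 _]mulpC. Qed.

Lemma opm_neq0 a : opm R a != 0.
Proof.
apply/eqP => h; have := opm_sq a; rewrite h mul0mx => /matrixP/(_ ord0 ord0).
by rewrite !mxE /= => /eqP; rewrite eq_sym oner_eq0.
Qed.

Lemma commutesE a b : commutes R a b = commb a b.
Proof.
rewrite /commutes !opm_mul (mulptC b a) /commb.
have lt4 n : (n %% 4 < 4)%N by rewrite ltn_pmod.
have [h|h] := eqVneq (ex a b %% 4)%N (ex b a %% 4)%N.
  by apply/eqP; rewrite -(ipow_mod (ex a b)) h ipow_mod.
apply/negbTE/eqP => E.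
have : ('i%C ^+ ex a b - 'i%C ^+ ex b a) *: opm R (mulpt a b) = 0.
  by rewrite scalerBl E subrr.
move/eqP; rewrite scaler_eq0 subr_eq0 (negPf (opm_neq0 _)) orbF.
rewrite -(ipow_mod (ex a b)) -(ipow_mod (ex b a)) => /eqP /ipow_inj.
by move/(_ (lt4 _) (lt4 _))/eqP; rewrite (negPf h).
Qed.

Lemma anti_check : forall a b : pt,
  ~~ commb a b ==> (ex a b %% 4 == (ex b a + 2) %% 4)%N.
Proof. by apply: all_pts2; vm_compute. Qed.

Lemma opm_anti a b : ~~ commb a b -> opm R a *m opm R b = - (opm R b *m opm R a).
Proof.
move=> nc; have := anti_check a b; rewrite nc /= => /eqP h.
rewrite !opm_mul (mulptC b a) -(ipow_mod (ex a b)) h ipow_mod exprD i2.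
by rewrite mulrN1 scaleNr.
Qed.

Lemma conj_sign u q :
  opm R u *m opm R q *m opm R u = (-1) ^+ (~~ commb u q) *: opm R q.
Proof.
case cq: (commb u q) => /=.
  move: cq; rewrite -commutesE => /eqP ->.
  by rewrite -mulmxA opm_sq mulmx1 expr0 scale1r.
rewrite opm_anti ?cq // mulNmx -mulmxA opm_sq mulmx1 expr1 scaleN1r //.
Qed.

Definition adj m n (M : 'M[C]_(m, n)) : 'M[C]_(n, m) := (map_mx Num.conj M)^T.

Lemma adjM m n p (A : 'M[C]_(m, n)) (B : 'M[C]_(n, p)) : adj (A *m B) = adj B *m adj A.
Proof. by rewrite /adj map_mxM trmx_mul. Qed.

Lemma adjK m n (A : 'M[C]_(m, n)) : adj (adj A) = A.
Proof. by apply/matrixP => i j; rewrite !mxE conjCK. Qed.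

Lemma adjD m n (A B : 'M[C]_(m, n)) : adj (A + B) = adj A + adj B.
Proof. by apply/matrixP => i j; rewrite !mxE rmorphD. Qed.

Lemma adjZ m n a (A : 'M[C]_(m, n)) : adj (a *: A) = Num.conj a *: adj A.
Proof. by apply/matrixP => i j; rewrite !mxE rmorphM. Qed.

Lemma adj1 n : adj (1 : 'M[C]_n) = 1.
Proof. by apply/matrixP => i j; rewrite !mxE eq_sym; case: (_ == _); rewrite ?rmorph0 ?rmorph1. Qed.

Lemma conj_i : Num.conj ('i%C : C) = - 'i%C.
Proof. by rewrite complexiE conjCi. Qed.

Lemma conjNi : Num.conj (- 'i%R : C) = 'i%R.
Proof. rewrite rmorphN -[RHS]opprK; congr (- _); exact: conjCi. Qed.

Lemma pauli_adj k : adj (pauli R k) = pauli R k.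
Proof.
case: k => [[|[|[|[|//]]]] ?]; rewrite /pauli /= ?adj1 //;
apply/matrixP => a b; rewrite !mxE;
case: a => [[|[|//]] ?]; case: b => [[|[|//]] ?];
rewrite /= ?conjNi ?rmorph0 ?rmorph1 ?rmorphN ?rmorphN1 ?conj_i ?conjCi ?opprK //;
rewrite ?rmorph0 ?rmorph1 ?rmorphN ?rmorphN1 ?conj_i ?conjCi ?opprK //.
Qed.

Lemma adj_opm q : adj (opm R q) = opm R q.
Proof. by rewrite /adj /opm map_mxT trmx_tens -!/(adj _) !pauli_adj. Qed.

Lemma norm_ge0 n (w : 'cV[C]_n) : 0 <= (adj w *m w) 0 0.
Proof. by rewrite !mxE; apply: sumr_ge0 => i _; rewrite !mxE mulrC mul_conjC_ge0. Qed.

Lemma norm_eq0 n (w : 'cV[C]_n) : (adj w *m w) 0 0 = 0 -> w = 0.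
Proof.
rewrite mxE => h; apply/matrixP => i j; rewrite [j]ord1 mxE.
have ge k : predT k -> 0 <= adj w 0 k * w k 0 by rewrite !mxE mulrC mul_conjC_ge0.
have := psumr_eq0P ge h (i := i) isT.
by rewrite !mxE mulrC => /eqP; rewrite mul_conjC_eq0 => /eqP.
Qed.

Lemma psd_adj n (K : 'M[C]_(n, 2 * 2)) : psd (adj K *m K).
Proof.
move=> v; rewrite -/(adj v).
have -> : adj v *m (adj K *m K) *m v = adj (K *m v) *m (K *m v) by rewrite adjM !mulmxA.
exact: norm_ge0.
Qed.

Lemma psd_trans M : psd (R:=R) M -> psd M^T.
Proof.
move=> h v; have := h (map_mx Num.conj v).
rewrite -/(adj v) -/(adj (map_mx Num.conj v)).
have -> : adj (map_mx Num.conj v) = v^T.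
  by apply/matrixP => i j; rewrite !mxE conjCK.
suff -> : (adj v *m M^T *m v) 0 0 = (v^T *m M *m map_mx Num.conj v) 0 0 by [].
have tr11 (X : 'M[C]_1) : X 0 0 = X^T 0 0 by rewrite mxE.
by rewrite tr11 !trmx_mul (trmxK M) /adj (trmxK (map_mx _ v)) mulmxA. Qed.

Lemma psd_conjU U M : adj U = U -> psd (R:=R) M -> psd (U *m M *m U).
Proof.
move=> hU h v; rewrite -/(adj v).
have -> : adj v *m (U *m M *m U) *m v = adj (U *m v) *m M *m (U *m v).
  by rewrite adjM hU !mulmxA.
exact: h.
Qed.

Lemma ptransE (M : 'M[C]_(2 * 2)) i j : ptrans M i j =
  M (mxtens_index ((mxtens_unindex i).1, (mxtens_unindex j).2))
    (mxtens_index ((mxtens_unindex j).1, (mxtens_unindex i).2)).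
Proof. exact: mxE. Qed.

Lemma ptrans_tens (A B : 'M[C]_2) : ptrans (A *t B) = A *t B^T.
Proof.
apply/matrixP => i j; case: (mxtens_indexP i) => i0 i1; case: (mxtens_indexP j) => j0 j1.
by rewrite ptransE !mxtens_indexK /= !mxE !mxtens_indexK.
Qed.

Lemma ptransD (A B : 'M[C]_(2 * 2)) : ptrans (A + B) = ptrans A + ptrans B.
Proof. by apply/matrixP => i j; rewrite !ptransE !mxE. Qed.
Lemma ptransZ a (A : 'M[C]_(2 * 2)) : ptrans (a *: A) = a *: ptrans A.
Proof. by apply/matrixP => i j; rewrite !ptransE !mxE. Qed.
Lemma ptrans0 : ptrans (0 : 'M[C]_(2 * 2)) = 0.
Proof. by apply/matrixP => i j; rewrite !ptransE !mxE. Qed.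

Lemma pauli_tr k : (pauli R k)^T = (-1) ^+ (k == I2) *: pauli R k.
Proof.
case: k => [[|[|[|[|//]]]] ?]; rewrite /pauli /= ?trmx1 ?expr0 ?scale1r ?expr1 //;
apply/matrixP => a b; rewrite !mxE;
case: a => [[|[|//]] ?]; case: b => [[|[|//]] ?];
rewrite /= ?mulN1r ?opprK ?oppr0 //.
Qed.

Lemma opm_tr q : (opm R q)^T = (-1) ^+ ((q.1 == I2) (+) (q.2 == I2)) *: opm R q.
Proof. by rewrite /opm trmx_tens !pauli_tr tensZl tensZr scalerA signr_addb. Qed.

Lemma ptrans_opm q : ptrans (opm R q) = (-1) ^+ (q.2 == I2) *: opm R q.
Proof. by rewrite /opm ptrans_tens pauli_tr tensZr. Qed.

Lemma perp_comm p q : q \in perp R p -> commb p q.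
Proof. by rewrite inE => /andP[_]; rewrite commutesE. Qed.

Definition W p (d : pt -> C) (f : pt -> bool) : 'M[C]_(2 * 2) :=
  4^-1 *: (1 + \sum_(q in perp R p) d q *: ((-1) ^+ f q *: opm R q)).

Lemma xstateW p c : xstate p c = W p (fun q => (c q)%:C) (fun _ => false).
Proof. by rewrite /xstate /W; congr (_ *: (_ + _)); apply: eq_bigr => q _; rewrite expr0 scale1r. Qed.

Lemma W_ext p d f g : (forall q, commb p q -> f q = g q) -> W p d f = W p d g.
Proof.
move=> h; rewrite /W; congr (_ *: (_ + _)); apply: eq_bigr => q /perp_comm hq.
by rewrite h.
Qed.

Lemma ptransW p d f : ptrans (W p d f) = W p d (fun q => f q (+) (q.2 == I2)).
Proof.
rewrite /W ptransZ ptransD -opm1 ptrans_opm /= expr0 scale1r.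
rewrite (big_morph (@ptrans R) ptransD ptrans0); congr (_ *: (_ + _)).
by apply: eq_bigr => q _; rewrite !ptransZ ptrans_opm; congr (_ *: _); rewrite scalerA -signr_addb.
Qed.

Lemma trW p d f :
  (W p d f)^T = W p d (fun q => f q (+) ((q.1 == I2) (+) (q.2 == I2))).
Proof.
rewrite /W linearZ linearD /= trmx1 linear_sum /=; congr (_ *: (_ + _)).
by apply: eq_bigr => q _; rewrite [in LHS]linearZ /= [in LHS]linearZ /= opm_tr; congr (_ *: _); rewrite scalerA -signr_addb.
Qed.

Lemma conjW u p d f :
  opm R u *m W p d f *m opm R u = W p d (fun q => f q (+) ~~ commb u q).
Proof.
rewrite /W -scalemxAr -scalemxAl mulmxDr mulmxDl mulmx1 opm_sq mulmx_sumr mulmx_suml.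
congr (_ *: (_ + _)); apply: eq_bigr => q _.
by rewrite -!scalemxAr -!scalemxAl conj_sign; congr (_ *: _); rewrite scalerA -signr_addb.
Qed.

Definition inQ0 (p : pt) : bool := (p.1 != I0) && (p.2 != I0).
Lemma Q0E p : (p \in Q0) = inQ0 p.
Proof. by rewrite inE. Qed.
Lemma perpE p q : (q \in perp R p) = is_point q && commb p q.
Proof. by rewrite inE commutesE. Qed.

Definition ch (p : pt) : bool * pt :=
  if p.1 == I0 then (false, if p.2 == I2 then (I0, I3) else (I0, I0))
  else (true, if p.1 == I2 then (I3, I0) else (I0, I0)).

Lemma ch_check : forall p q : pt, (is_point p && ~~ inQ0 p && commb p q) ==>
  ((false (+) (q.2 == I2)) ==
   if (ch p).1 then (false (+) ((q.1 == I2) (+) (q.2 == I2))) (+) ~~ commb (ch p).2 q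
   else false (+) ~~ commb (ch p).2 q).
Proof. by apply: all_pts2; vm_compute. Qed.

Lemma group1_out p : is_point p -> ~~ inQ0 p -> group1 R p.
Proof.
move=> pp pQ c hv; rewrite /separable.
have := ch_check p; case: (ch p) => t u /= hc.
have key : ptrans (xstate p c) =
    opm R u *m (if t then (xstate p c)^T else xstate p c) *m opm R u.
  rewrite xstateW ptransW; case: t hc => hc; rewrite ?trW conjW; apply: W_ext => q hq;
  by have := hc q; rewrite pp pQ hq /= => /eqP.
rewrite key; apply: psd_conjU; first exact: adj_opm.
by case: t {hc key}; [apply: psd_trans|]; exact: hv.
Qed.

Definition nxt (j : 'I_4) : 'I_4 := match val j with 1 => I2 | 2 => I3 | _ => I1 end.
Definition g2 (p : pt) : pt := (nxt p.1, nxt p.2).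
Definition g3 (p : pt) : pt := mulpt p (g2 p).
Definition h2 (p : pt) : pt := (nxt p.1, nxt (nxt p.2)).
Definition h3 (p : pt) : pt := mulpt p (h2 p).
Definition lam (p : pt) : bool := (ex p (g2 p) %% 4 == 2)%N.

Definition goodline (a b : pt) : bool :=
  [&& is_point a, is_point b, is_point (mulpt a b),
      [&& a != b, b != mulpt a b & a != mulpt a b],
      [&& commb a b, commb b (mulpt a b) & commb a (mulpt a b)] &
      [&& inQ0 a, inQ0 b & inQ0 (mulpt a b)]].

Lemma g_check : forall p : pt, inQ0 p ==>
  [&& goodline p (g2 p), goodline p (h2 p),
      (ex p (g2 p) %% 4 == if lam p then 2 else 0)%N &
      (p.2 == I2) (+) ((g2 p).2 == I2) (+) ((g3 p).2 == I2)].
Proof. by apply: all_pts; vm_compute. Qed.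

Lemma cover_check : forall p y : pt, [&& inQ0 p, inQ0 y, commb p y & y != p] ==>
  (y \in [:: g2 p; g3 p; h2 p; h3 p]).
Proof. by apply: all_pts2; vm_compute. Qed.

Lemma sum3 (F : pt -> 'M[C]_(2 * 2)) p a b e :
  a \in perp R p -> b \in perp R p -> e \in perp R p ->
  a != b -> b != e -> a != e ->
  (forall q, q != a -> q != b -> q != e -> F q = 0) ->
  \sum_(q in perp R p) F q = F a + F b + F e.
Proof.
move=> ha hb he hab hbe hae hF.
rewrite (bigD1 a) //= (bigD1 b) /=; last by rewrite hb eq_sym hab.
rewrite (bigD1 e) /=; last by rewrite he eq_sym hae eq_sym hbe.
rewrite big1 ?addr0 ?addrA // => q /andP[/andP[/andP[_ qa] qb] qe]; exact: hF.
Qed.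

Lemma tr_tens (A B : 'M[C]_2) : \tr (A *t B) = \tr A * \tr B.
Proof. by rewrite /mxtrace mulr_sum; apply: eq_bigr => i _; rewrite mxE. Qed.

Lemma tr_pauli k : k != I0 -> \tr (pauli R k) = 0.
Proof.
case: k => [[|[|[|[|//]]]] ?] // _; rewrite /mxtrace /pauli /= big_ord_recr big_ord_recr big_ord0 /= !mxE /=;
by rewrite ?add0r ?addr0 ?subrr.
Qed.

Lemma tr_opm q : is_point q -> \tr (opm R q) = 0.
Proof.
case: q => a b; rewrite /is_point /opm tr_tens /=.
have [->|na] := eqVneq a I0; last by rewrite tr_pauli // mul0r.
have [->|nb] := eqVneq b I0; first by [].
by rewrite [\tr (pauli R b)]tr_pauli // mulr0.
Qed.

Lemma conj4 : Num.conj (4^-1 : C) = 4^-1.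
Proof. by rewrite fmorphV /= conjC_nat. Qed.

Lemma psd_pair (G1 G2 : 'M[C]_(2 * 2)) :
  adj G1 = G1 -> adj G2 = G2 -> G1 *m G1 = 1 -> G2 *m G2 = 1 ->
  G1 *m G2 = G2 *m G1 -> psd (4^-1 *: ((1 + G1) *m (1 + G2))).
Proof.
move=> a1 a2 s1 s2 c12.
set X := (1 + G1) *m (1 + G2).
have cAB : (1 + G2) *m (1 + G1) = (1 + G1) *m (1 + G2).
  by rewrite !mulmxDr !mulmxDl !mul1mx !mulmx1 c12 [LHS]addrACA.
have aX : adj X = X by rewrite /X adjM !adjD adj1 a1 a2 cAB.
have XX : X *m X = 4%:R *: X.
  have A2 : (1 + G1) *m (1 + G1) = 2%:R *: (1 + G1).
    by rewrite mulmxDr mulmx1 mulmxDl mul1mx s1 scalerDr !scaler_nat !mulr2n [G1 + 1]addrC addrACA.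
  have B2 : (1 + G2) *m (1 + G2) = 2%:R *: (1 + G2).
    by rewrite mulmxDr mulmx1 mulmxDl mul1mx s2 scalerDr !scaler_nat !mulr2n [G2 + 1]addrC addrACA.
  rewrite /X -mulmxA (mulmxA (1 + G2)) cAB -(mulmxA (1 + G1)) B2 mulmxA A2.
  by rewrite -scalemxAl -scalemxAr scalerA -natrM.
have -> : 4^-1 *: X = adj (4^-1 *: X) *m (4^-1 *: X).
  rewrite adjZ conj4 aX -scalemxAl -scalemxAr XX !scalerA; congr (_ *: _).
  by rewrite divfK // pnatr_eq0.
exact: psd_adj.
Qed.

Lemma ent_pair (A B : 'M[C]_(2 * 2)) :
  A *m A = 1 -> B *m B = 1 -> A *m B = B *m A ->
  \tr A = 0 -> \tr B = 0 -> \tr (A *m B) = 0 ->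
  ~ psd (4^-1 *: (1 + A + B - A *m B)).
Proof.
move=> sA sB cAB tA tB tAB h.
set M := 4^-1 *: _ in h.
pose Q := (1 - A) *m (1 - B).
have AQ : A *m Q = - Q.
  by rewrite /Q mulmxA (mulmxBr A) mulmx1 sA -mulNmx opprB.
have BQ : B *m Q = - Q.
  have e : B *m (1 - A) = (1 - A) *m B by rewrite (mulmxBr B) (mulmxBl 1 A B) mulmx1 mul1mx cAB.
  by rewrite /Q mulmxA e -mulmxA (mulmxBr B) mulmx1 sB -mulmxN opprB.
have MQ : M *m Q = (- (2%:R * 4^-1)) *: Q.
  rewrite /M -scalemxAl (mulmxBl _ (A *m B)) !mulmxDl mul1mx -(mulmxA A B Q) BQ mulmxN AQ.
  rewrite opprK subrr add0r -opprD scalerN scaleNr; congr (- _).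
  by rewrite mulrC -scalerA scaler_nat mulr2n.
have w0 (x : 'cV[C]_(2 * 2)) : Q *m x = 0.
  apply: norm_eq0; apply/eqP; rewrite eq_le norm_ge0 andbT.
  have := h (Q *m x); rewrite -/(adj _) -[adj _ *m M *m _]mulmxA (mulmxA M) MQ.
  rewrite -scalemxAl -scalemxAr mxE mulNr oppr_ge0 pmulr_rle0 //.
  by rewrite divr_gt0 // ltr0n.
have Q0 : Q = 0.
  apply/matrixP => i j; have := w0 (delta_mx j 0); rewrite -colE.
  by move/matrixP/(_ i 0); rewrite !mxE.
have : \tr Q = 0 by rewrite Q0 linear0.
rewrite /Q mulmxBl mul1mx !mulmxBr mulmx1 !linearB /= mxtrace1 tA tB tAB !subr0.
by rewrite !oppr0 !addr0 => /eqP; rewrite pnatr_eq0.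
Qed.

Lemma opm_comm a b : commb a b -> opm R a *m opm R b = opm R b *m opm R a.
Proof. by rewrite -commutesE => /eqP. Qed.

Lemma sign_sq (s : bool) (G : 'M[C]_(2 * 2)) :
  G *m G = 1 -> ((-1) ^+ s *: G) *m ((-1) ^+ s *: G) = 1.
Proof. by move=> h; rewrite -scalemxAl -scalemxAr scalerA -signr_addb addbb expr0 scale1r h. Qed.

Lemma sign3 (x y z : bool) (a : C) : x (+) y (+) z ->
  a * (-1) ^+ z = - ((-1) ^+ x * (-1) ^+ y * a).
Proof.
case: x; case: y; case: z; rewrite /= ?expr0 ?expr1 ?mulr1 ?mul1r ?mulrN1 ?mulN1r ?opprK // => _.
by rewrite mul1r.
Qed.

Lemma rc1 : ((1 : R)%:C : C) = 1.
Proof. by []. Qed.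
Lemma rc0 : ((0 : R)%:C : C) = 0.
Proof. by []. Qed.
Lemma rcN1 : ((-1 : R)%:C : C) = -1.
Proof. by apply/eqP; rewrite eq_complex /= oppr0 !eqxx. Qed.
Lemma rc_sign (b : bool) : (((-1) ^+ b : R)%:C : C) = (-1) ^+ b.
Proof. by case: b; rewrite /= ?expr0 ?expr1 ?rc1 ?rcN1. Qed.

Lemma group2_in p : inQ0 p -> group2 R p.
Proof.
move=> pQ.
have := g_check p; rewrite pQ /= => /and4P[gl _ hex hY].
move: gl; rewrite /goodline => /andP[pp /andP[p2 /andP[p3 /andP[/and3P[d12 d23 d13] /andP[/and3P[c12 c23 c13] _]]]]].
rewrite -/(g3 p) in p3 d23 d13 c23 c13.
pose c : pt -> R := fun q => if q == p then 1 else if q == g2 p then 1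
  else if q == g3 p then (-1) ^+ lam p else 0.
pose sC : C := (-1) ^+ lam p.
have m12 : opm R p *m opm R (g2 p) = sC *: opm R (g3 p).
  rewrite opm_mul -ipow_mod (eqP hex) /sC.
  by case: (lam p); rewrite ?expr0 ?expr1 ?i2.
have ss : sC * sC = 1 by rewrite /sC -signr_addb addbb.
have G3e : opm R (g3 p) = sC *: (opm R p *m opm R (g2 p)) by rewrite m12 scalerA ss scale1r.
have inP q : is_point q -> commb p q -> q \in perp R p by rewrite perpE => -> ->.
have hp : p \in perp R p by apply: inP; rewrite ?pp /commb ?eqxx.
have hg2 := inP _ p2 c12; have hg3 := inP _ p3 c13.
have cz q : q != p -> q != g2 p -> q != g3 p -> c q = 0.
  by rewrite /c => /negPf -> /negPf -> /negPf ->.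
have c1 : c p = 1 by rewrite /c eqxx.
have c2 : c (g2 p) = 1 by rewrite /c eq_sym (negPf d12) eqxx.
have c3 : c (g3 p) = (-1) ^+ lam p by rewrite /c eq_sym (negPf d13) eq_sym (negPf d23) eqxx.
have e1 : (c p)%:C = 1 :> C by rewrite c1.
have e2 : (c (g2 p))%:C = 1 :> C by rewrite c2.
have e3 : (c (g3 p))%:C = sC.
  rewrite c3 /sC; case: (lam p); rewrite /= ?expr0 ?expr1 //.
  by apply/eqP; rewrite eq_complex /= oppr0 !eqxx.
have zF (f : pt -> bool) q : q != p -> q != g2 p -> q != g3 p ->
    (c q)%:C *: ((-1) ^+ f q *: opm R q) = 0.
  by move=> a b e; rewrite cz // scale0r.
exists c; split.
  rewrite /valid xstateW /W (sum3 hp hg2 hg3 d12 d23 d13); last exact: zF.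
  rewrite e1 e2 e3 /= !expr0 !scale1r G3e scalerA ss scale1r.
  have -> : 1 + (opm R p + opm R (g2 p) + opm R p *m opm R (g2 p)) =
            (1 + opm R p) *m (1 + opm R (g2 p)).
    by rewrite mulmxDl mul1mx !mulmxDr mulmx1 !addrA (addrAC 1 (opm R (g2 p))).
  by apply: psd_pair; rewrite ?adj_opm ?opm_sq // opm_comm.
rewrite /entangled xstateW ptransW /W (sum3 hp hg2 hg3 d12 d23 d13); last exact: zF.
rewrite e1 e2 e3 /= !scale1r.
set A := (-1) ^+ (p.2 == I2) *: opm R p.
set B := (-1) ^+ ((g2 p).2 == I2) *: opm R (g2 p).
have eAB : A *m B = ((-1) ^+ (p.2 == I2) * (-1) ^+ ((g2 p).2 == I2) * sC) *: opm R (g3 p).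
  by rewrite /A /B -scalemxAl -scalemxAr m12 !scalerA.
have -> : 1 + (A + B + sC *: ((-1) ^+ ((g3 p).2 == I2) *: opm R (g3 p))) =
          1 + A + B - A *m B.
  by rewrite eAB scalerA (sign3 _ hY) scaleNr !addrA.
apply: ent_pair.
- exact: sign_sq (opm_sq _).
- exact: sign_sq (opm_sq _).
- by rewrite /A /B -!scalemxAl -!scalemxAr (opm_comm c12) !scalerA mulrC.
- by rewrite /A linearZ /= tr_opm // mulr0.
- by rewrite /B linearZ /= tr_opm // mulr0.
- by rewrite eAB linearZ /= tr_opm // mulr0.
Qed.

Lemma comm_refl a : commutes R a a.
Proof. by rewrite /commutes. Qed.
Lemma comm_sym a b : commutes R a b = commutes R b a.
Proof. by rewrite /commutes eq_sym. Qed.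

Lemma commb_refl a : commb a a.
Proof. by rewrite /commb eqxx. Qed.
Lemma commbC a b : commb a b = commb b a.
Proof. by rewrite /commb eq_sym. Qed.

Lemma line_comm L x y : is_line R L -> x \in L -> y \in L ->
  is_point y && commb x y.
Proof.
case=> a [b [c [-> /and3P[pa pb pc] _ /and3P[cab cbc cac] _]]].
rewrite !commutesE in cab cbc cac.
have cba : commb b a by rewrite commbC.
have ccb : commb c b by rewrite commbC.
have cca : commb c a by rewrite commbC.
rewrite !inE => /orP[/orP[]|] /eqP -> /orP[/orP[]|] /eqP ->;
by rewrite ?pa ?pb ?pc ?cab ?cbc ?cac ?cba ?ccb ?cca ?commb_refl.
Qed.

Lemma inQ0_point p : inQ0 p -> is_point p.
Proof. by case: p => a b /andP[ha _]; apply: contra ha => /eqP[-> _]. Qed.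

Lemma mkline a b : goodline a b -> grid_line R [set a; b; mulpt a b].
Proof.
move=> /andP[pa /andP[pb /andP[pc /andP[dd /andP[cc /and3P[qa qb qc]]]]]].
split.
  exists a, b, (mulpt a b); split.
  - by [].
  - by rewrite pa pb pc.
  - exact: dd.
  - by rewrite !commutesE.
  - by exists ('i%C ^+ ex a b); exact: opm_mul.
by apply/subsetP => x; rewrite !inE => /orP[/orP[]|] /eqP ->; [exact: qa | exact: qb | exact: qc].
Qed.

Definition ov (p : pt) : seq pt :=
  if p.1 == I0 then [:: (I1, p.2); (I2, p.2); (I3, p.2)]
  else [:: (p.1, I1); (p.1, I2); (p.1, I3)].

Lemma out_check : forall p x : pt, [&& is_point p, ~~ inQ0 p, inQ0 x & commb p x] ==>
  (~~ commb p (g2 x) && goodline x (g2 x)).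
Proof. by apply: all_pts2; vm_compute. Qed.

Lemma ov_check1 : forall p q : pt, (is_point p && ~~ inQ0 p) ==>
  ((is_point q && commb p q && inQ0 q) == (q \in ov p)).
Proof. by apply: all_pts2; vm_compute. Qed.

Lemma ov_check2 : forall p : pt, (is_point p && ~~ inQ0 p) ==> uniq (ov p).
Proof. by apply: all_pts; vm_compute. Qed.

Lemma ov_check3 : forall p x : pt, (is_point p && ~~ inQ0 p) ==>
  all (fun y => [&& x \in ov p, y \in ov p & x != y] ==> ~~ commb x y) pts.
Proof. by apply: all_pts2; vm_compute. Qed.

Lemma uniq_pts : uniq pts.
Proof. by vm_compute. Qed.

Lemma in3 (a b c x : pt) : (x \in [set a; b; c]) = [|| x == a, x == b | x == c].
Proof. by rewrite !inE orbA. Qed.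

Lemma tangential_in p : inQ0 p -> tangential_at R p.
Proof.
move=> pQ; have := g_check p; rewrite pQ /= => /and4P[gl hl _ _].
exists p; split; first by rewrite Q0E.
move=> y; split.
  rewrite in_setI perpE Q0E => /andP[/andP[py cy] yQ].
  have [->|ny] := eqVneq y p; [by left | right].
  have := cover_check p y; rewrite pQ yQ cy ny /= !inE.
  case/orP => [/eqP->|/orP[/eqP->|/orP[/eqP->|/eqP->]]].
  - by exists [set p; g2 p; g3 p]; split; [exact: mkline gl | rewrite in3 eqxx | rewrite in3 eqxx orbT].
  - by exists [set p; g2 p; g3 p]; split; [exact: mkline gl | rewrite in3 eqxx | rewrite in3 eqxx !orbT].
  - by exists [set p; h2 p; h3 p]; split; [exact: mkline hl | rewrite in3 eqxx | rewrite in3 eqxx orbT].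
  - by exists [set p; h2 p; h3 p]; split; [exact: mkline hl | rewrite in3 eqxx | rewrite in3 eqxx !orbT].
case => [->|[L [gL xL yL]]].
  by rewrite in_setI perpE Q0E pQ inQ0_point // commb_refl.
have := line_comm gL.1 xL yL => /andP[py cy].
rewrite in_setI perpE py cy /=.
by move/subsetP: gL.2 => /(_ y yL).
Qed.

Lemma not_tangential_out p : is_point p -> ~~ inQ0 p -> ~ tangential_at R p.
Proof.
move=> pp pQ [x [xQ H]].
have := (proj2 (H x)) (or_introl erefl); rewrite in_setI perpE => /andP[/andP[_ cx] _].
rewrite Q0E in xQ.
have := out_check p x; rewrite pp pQ xQ cx /= => /andP[nc gl].
have : g2 x \in perp R p :&: Q0.
  apply: (proj2 (H _)); right; exists [set x; g2 x; g3 x].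
  by split; [exact: mkline gl | rewrite in3 eqxx | rewrite in3 eqxx orbT].
by rewrite in_setI perpE => /andP[/andP[_ c] _]; rewrite c in nc.
Qed.

Lemma transversal_out p : is_point p -> ~~ inQ0 p -> transversal_at R p.
Proof.
move=> pp pQ.
have eS : perp R p :&: Q0 = [set q in ov p].
  apply/setP => q; rewrite in_setI perpE Q0E inE.
  by have := ov_check1 p q; rewrite pp pQ /= => /eqP.
split.
- exact: subsetIr.
- have u : uniq (ov p) by have := ov_check2 p; rewrite pp pQ.
  by rewrite eS cardsE (card_uniqP u) /ov; case: ifP.
move=> x y; rewrite eS !inE => hx hy nxy [L [gL xL yL]].
have := line_comm gL.1 xL yL => /andP[_ cxy].
have hpp : is_point p && ~~ inQ0 p by rewrite pp pQ.
move: (ov_check3 p x); rewrite hpp implyTb => /allP h; have := h y (mem_pts y).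
by rewrite hx hy nxy cxy.
Qed.

Lemma not_transversal_in p : inQ0 p -> ~ transversal_at R p.
Proof.
move=> pQ [_ _ H].
have := g_check p; rewrite pQ /= => /and4P[gl _ _ _].
have gl' := gl.
move: gl => /andP[pp /andP[p2 /andP[_ /andP[/and3P[d12 _ _] /andP[/and3P[c12 _ _] /and3P[_ q2 _]]]]]].
apply: (H p (g2 p)).
- by rewrite in_setI perpE Q0E pQ pp commb_refl.
- by rewrite in_setI perpE Q0E p2 c12 q2.
- exact: d12.
by exists [set p; g2 p; g3 p]; split; [exact: mkline gl' | rewrite in3 eqxx | rewrite in3 eqxx orbT].
Qed.
End S.

Lemma card_filter_pts (P : pred pt) : #|[set q in [seq q <- pts | P q]]| = size [seq q <- pts | P q].
Proof. by rewrite cardsE; apply/card_uniqP; apply: filter_uniq; exact: uniq_pts. Qed.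


Local Close Scope complex_scope.
Local Close Scope ring_scope.

Theorem proposition3 (R : realType) :
  [/\ exists S : {set pt}, #|S| = 9 /\
        (forall p : pt, p \in S <-> (is_point p /\ group2 R p)),
      exists S : {set pt}, #|S| = 6 /\
        (forall p : pt, p \in S <-> (is_point p /\ group1 R p)),
      forall p : pt, is_point p -> (group2 R p <-> tangential_at R p) &
      forall p : pt, is_point p -> (group1 R p <-> transversal_at R p)].
Proof.
have G2 p : is_point p -> (group2 R p <-> inQ0 p).
  move=> pp; split; last by move=> h; exact: (@group2_in R p h).
  move=> [c [v e]]; apply/negPn/negP => nQ; apply: e; exact: (@group1_out R p pp nQ c v).
have G1 p : is_point p -> (group1 R p <-> ~~ inQ0 p).
  move=> pp; split; last by move=> h; exact: (@group1_out R p pp h).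
  move=> g; apply/negP => pQ; have [c [v e]] := @group2_in R p pQ; exact: e (g c v).
have T p : is_point p -> (tangential_at R p <-> inQ0 p).
  move=> pp; split; last by move=> h; exact: (@tangential_in R p h).
  by move=> t; apply/negPn/negP => nQ; exact: (@not_tangential_out R p pp nQ t).
have V p : is_point p -> (transversal_at R p <-> ~~ inQ0 p).
  move=> pp; split; last by move=> h; exact: (@transversal_out R p pp h).
  by move=> t; apply/negP => pQ; exact: (@not_transversal_in R p pQ t).
split.
- exists [set q in [seq q <- pts | inQ0 q]]; split; first by rewrite card_filter_pts.
  move=> p; rewrite inE mem_filter mem_pts andbT; split.
    by move=> h; split; [exact: inQ0_point | apply/(G2 p (inQ0_point h))].
  by case=> pp g; apply/(G2 p pp).
- exists [set q in [seq q <- pts | is_point q && ~~ inQ0 q]]; split; first by rewrite card_filter_pts.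
  move=> p; rewrite inE mem_filter mem_pts andbT; split.
    by case/andP => pp h; split; [exact: pp | apply/(G1 p pp)].
  by case=> pp g; rewrite pp; apply/(G1 p pp).
- by move=> p pp; apply: iff_trans (G2 p pp) (iff_sym (T p pp)).
- by move=> p pp; apply: iff_trans (G1 p pp) (iff_sym (V p pp)).
Qed.
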